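(* For $x\in(0,1)$ let $x'=\sqrt{1-x^2}$ and $f(x)=x^2x'^2\,\mathcal{K}(x)\mathcal{K}(x')$. Then $f$ is increasing on $(0,1/\sqrt2]$ and decreasing on $[1/\sqrt2,1)$, and $$\max_{0<x<1}f(x)=f(\sqrt{1/2})=\tfrac14\big(\mathcal{K}(\sqrt{1/2})\big)^2=0.859398\ldots.$$
   Context: $\mathcal{K}(x)=\frac{\pi}{2}F(\tfrac12,\tfrac12;1;x^2)$ for $x\in(0,1)$ is the complete elliptic integral of the first kind, where $F(a,b;c;x)=\sum_{n\ge0}\frac{(a,n)(b,n)}{(c,n)n!}x^n$ and $(a,n)=a(a+1)\cdots(a+n-1)$, $(a,0)=1$. *)

(* Defs.v *)
From Stdlib Require Import Reals Lra.
From Coquelicot Require Import Coquelicot.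
Open Scope R_scope.

Fixpoint poch (a : R) (n : nat) : R :=
  match n with
  | O => 1
  | S m => poch a m * (a + INR m)
  end.

Definition hypF (a b c x : R) : R :=
  Series (fun n => poch a n * poch b n / (poch c n * INR (Factorial.fact n)) * x ^ n).

Definition ellK (x : R) : R := PI / 2 * hypF (1/2) (1/2) 1 (x ^ 2).

Definition kprime (x : R) : R := sqrt (1 - x ^ 2).

Definition fcor (x : R) : R := x ^ 2 * kprime x ^ 2 * ellK x * ellK (kprime x).

(* Main.v *)
Require Import Defs.
From Stdlib Require Import Reals Lra Lia.
From Coquelicot Require Import Coquelicot.
Open Scope R_scope.


Definition a (n : nat) : R :=
  poch (1/2) n * poch (1/2) n / (poch 1 n * INR (Factorial.fact n)).

Lemma poch_pos x n : 0 < x -> 0 < poch x n.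
Proof. intro Hx; induction n; simpl; [lra|]. apply Rmult_lt_0_compat; auto.
  generalize (pos_INR n); lra. Qed.

Lemma a_0 : a 0 = 1.
Proof. unfold a; simpl; field. Qed.

Lemma a_S n : a (S n) = a n * ((2*INR n+1)/(2*INR n+2))^2.
Proof.
  unfold a. cbn [poch]. rewrite fact_simpl, mult_INR, S_INR.
  assert (H1 := poch_pos (1/2) n ltac:(lra)).
  assert (H2 := poch_pos 1 n ltac:(lra)).
  assert (H3 := INR_fact_lt_0 n).
  assert (H4 := pos_INR n).
  field; repeat split; lra.
Qed.

Lemma ratio_bounds n : 0 < (2*INR n+1)/(2*INR n+2) < 1.
Proof.
  assert (H4 := pos_INR n). split.
  - apply Rdiv_lt_0_compat; lra.
  - apply (Rmult_lt_reg_r (2*INR n+2)); [lra|].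
    unfold Rdiv; rewrite Rmult_assoc, Rinv_l; lra.
Qed.

Lemma a_pos n : 0 < a n.
Proof. induction n; [rewrite a_0; lra|]. rewrite a_S.
  destruct (ratio_bounds n). apply Rmult_lt_0_compat; auto. apply pow_lt; auto. Qed.

Lemma a_dec n : a (S n) <= a n.
Proof. rewrite a_S. destruct (ratio_bounds n) as [H1 H2].
  assert (H := a_pos n).
  assert (((2*INR n+1)/(2*INR n+2))^2 <= 1).
  { simpl. rewrite Rmult_1_r. nra. }
  nra. Qed.

Lemma a_le_1 n : a n <= 1.
Proof. induction n; [rewrite a_0; lra|]. generalize (a_dec n); lra. Qed.

Lemma a_1 : a 1 = 1/4.
Proof. rewrite a_S, a_0. simpl. field. Qed.

Lemma a_dec_le m n : (m <= n)%nat -> a n <= a m.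
Proof. induction 1; [lra|]. generalize (a_dec m0); lra. Qed.

Definition Rad1 (b : nat -> R) := Rbar_le 1 (CV_radius b).

Lemma R1_a : Rad1 a.
Proof.
  unfold Rad1. destruct (CV_radius_bounded a) as [Hub _]. apply Hub.
  exists 1. intros n. rewrite pow1, Rmult_1_r, Rabs_pos_eq.
  apply a_le_1. left; apply a_pos.
Qed.

Lemma inside b x : Rad1 b -> Rabs x < 1 -> Rbar_lt (Rabs x) (CV_radius b).
Proof. unfold Rad1. destruct (CV_radius b) as [r| |]; simpl; intros; auto; lra. Qed.

Lemma R1_derive b : Rad1 b -> Rad1 (PS_derive b).
Proof. unfold Rad1; rewrite CV_radius_derive; auto. Qed.
Lemma R1_incr b : Rad1 b -> Rad1 (PS_incr_1 b).
Proof. unfold Rad1; rewrite CV_radius_incr_1; auto. Qed.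
Lemma R1_scal c b : c <> 0 -> Rad1 b -> Rad1 (PS_scal c b).
Proof. unfold Rad1; intro; rewrite CV_radius_scal; auto. Qed.
Lemma R1_plus b c : Rad1 b -> Rad1 c -> Rad1 (PS_plus b c).
Proof. unfold Rad1; intros. eapply Rbar_le_trans; [|apply CV_radius_plus].
  apply Rbar_min_case; auto. Qed.

Ltac R1_tac := repeat match goal with
  | |- Rad1 (PS_plus _ _) => apply R1_plus
  | |- Rad1 (PS_incr_1 _) => apply R1_incr
  | |- Rad1 (PS_derive _) => apply R1_derive
  | |- Rad1 (PS_scal _ _) => apply R1_scal; [lra|]
  | |- Rad1 a => exact R1_a
  end.

Lemma exps b x : Rad1 b -> Rabs x < 1 -> ex_pseries b x.
Proof. intros; apply CV_radius_inside, inside; auto. Qed.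

Definition a1 := PS_derive a.
Definition a2 := PS_derive a1.
Definition F t := PSeries a t.
Definition F1 t := PSeries a1 t.
Definition F2 t := PSeries a2 t.

Lemma R1_a1 : Rad1 a1. Proof. unfold a1; R1_tac. Qed.
Lemma R1_a2 : Rad1 a2. Proof. unfold a2, a1; R1_tac. Qed.

Definition odec : nat -> R :=
  PS_plus (PS_plus (PS_plus (PS_plus (PS_incr_1 a2)
     (PS_scal (-1) (PS_incr_1 (PS_incr_1 a2)))) a1)
     (PS_scal (-2) (PS_incr_1 a1))) (PS_scal (-1/4) a).

Lemma odec_0 n : odec n = 0.
Proof.
  unfold odec, PS_plus, PS_scal, PS_incr_1, a2, a1, PS_derive.
  unfold plus, scal, zero. cbn -[a INR].
  destruct n as [|[|n]]; cbn -[a INR].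
  - rewrite a_S, a_0. simpl. field.
  - rewrite !a_S, a_0. simpl. field.
  - rewrite (a_S (S (S n))). rewrite !S_INR. assert (H := pos_INR n). field. lra.
Qed.

Ltac ex_tac := apply exps; [ unfold a2, a1; R1_tac | assumption ].

Lemma ode t : Rabs t < 1 -> t*(1-t)*F2 t + (1-2*t)*F1 t - F t/4 = 0.
Proof.
  intro Ht.
  assert (E : PSeries odec t = t*(1-t)*F2 t + (1-2*t)*F1 t - F t/4).
  { unfold odec.
    rewrite !PSeries_plus by ex_tac.
    rewrite !PSeries_scal, !PSeries_incr_1. unfold F, F1, F2. field. }
  rewrite <- E. rewrite (PSeries_ext _ (fun _ => 0)) by apply odec_0.
  apply PSeries_const_0.
Qed.

Definition Ac : nat -> R :=
  PS_plus (PS_plus (PS_plus a (PS_scal (-2) (PS_incr_1 a)))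
     (PS_scal 2 (PS_incr_1 a1))) (PS_scal (-2) (PS_incr_1 (PS_incr_1 a1))).

Definition A t := (1-2*t)*F t + 2*t*(1-t)*F1 t.

Lemma A_series t : Rabs t < 1 -> A t = PSeries Ac t.
Proof.
  intro Ht. unfold Ac.
  rewrite !PSeries_plus by ex_tac.
  rewrite !PSeries_scal, !PSeries_incr_1. unfold A, F, F1. ring.
Qed.

Lemma Ac_neg n : (1 <= n)%nat -> Ac n <= 0.
Proof.
  intro Hn.
  unfold Ac, PS_plus, PS_scal, PS_incr_1, a1, PS_derive.
  unfold plus, scal, zero. cbn -[a INR].
  destruct n as [|[|n]]; cbn -[a INR].
  - lia.
  - rewrite a_1, a_0. simpl. lra.
  - rewrite (a_S (S n)). rewrite !S_INR. assert (H := pos_INR n).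
    assert (Hp := a_pos (S n)).
    set (x := INR n) in *.
    set (q := ((2 * (x + 1) + 1) / (2 * (x + 1) + 2)) ^ 2).
    assert (Hq : q * (2*x+4)^2 = (2*x+3)^2) by (unfold q; field; lra).
    assert (Hq0 : 0 <= q) by (unfold q; apply pow2_ge_0).
    assert (K : (2*x+5)*q - (2*x+4) <= 0).
    { apply (Rmult_le_reg_r ((2*x+4)^2)); [nra|]. rewrite Rmult_0_l.
      replace (((2*x+5)*q - (2*x+4)) * (2*x+4)^2) with ((2*x+5)*(q*(2*x+4)^2) - (2*x+4)^3) by ring.
      rewrite Hq. nra. }
    nra.
Qed.

Lemma Ac_1 : Ac 1 = -5/4.
Proof.
  unfold Ac, PS_plus, PS_scal, PS_incr_1, a1, PS_derive.
  unfold plus, scal, zero. cbn -[a INR]. rewrite a_1, a_0. simpl. field.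
Qed.

Ltac rring := match goal with |- @eq _ ?x ?y => change (@eq R x y); ring end.

Lemma exs b x : Rad1 b -> Rabs x < 1 -> ex_series (fun k => b k * x ^ k).
Proof.
  intros Hb Hx. generalize (exps b x Hb Hx). unfold ex_pseries.
  apply ex_series_ext. intro n. rewrite pow_n_pow. unfold scal; simpl.
  unfold mult; simpl. rring.
Qed.

Lemma Series_zero : Series (fun _ => 0) = 0.
Proof.
  transitivity (PSeries (fun _ => 0) 0); [|apply PSeries_const_0].
  unfold PSeries. apply Series_ext. intro; rewrite Rmult_0_l; reflexivity.
Qed.

Lemma Series_ge_term u k : ex_series u -> (forall n, 0 <= u n) -> u k <= Series u.
Proof.
  intros Hex Hp. rewrite (Series_incr_n u (S k)) by (lia || auto). simpl pred.
  assert (T : 0 <= Series (fun j => u (S k + j)%nat)).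
  { rewrite <- Series_zero. apply Series_le.
    - intros; split; [lra | apply Hp].
    - apply (proj1 (ex_series_incr_n u (S k))); auto. }
  assert (S0 : u k <= sum_f_R0 u k).
  { destruct k; simpl; [lra|]. generalize (cond_pos_sum u k Hp); lra. }
  lra.
Qed.

Lemma mono b r s : Rad1 b -> (forall n, (1 <= n)%nat -> 0 <= b n) -> 0 < b 1%nat ->
  0 <= r -> r < s -> s < 1 -> PSeries b r < PSeries b s.
Proof.
  intros Hb Hn H1 Hr Hrs Hs.
  assert (Er := exs b r Hb ltac:(rewrite Rabs_pos_eq; lra)).
  assert (Es := exs b s Hb ltac:(rewrite Rabs_pos_eq; lra)).
  unfold PSeries.
  assert (D : Series (fun n => b n * s^n) - Series (fun n => b n * r^n)
             = Series (fun n => b n * s^n - b n * r^n)) by (rewrite Series_minus; auto).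
  assert (Ex : ex_series (fun n => b n * s^n - b n * r^n)).
  { generalize (ex_series_minus _ _ Es Er). apply ex_series_ext. intro n. reflexivity. }
  assert (G := Series_ge_term (fun n => b n * s^n - b n * r^n) 1 Ex).
  assert (T1 : 0 < b 1%nat * s ^ 1 - b 1%nat * r ^ 1) by (simpl; nra).
  assert (0 <= Series (fun n => b n * s^n - b n * r^n) - (b 1%nat * s ^ 1 - b 1%nat * r ^ 1)).
  { cut (b 1%nat * s ^ 1 - b 1%nat * r ^ 1 <= Series (fun n => b n * s^n - b n * r^n)); [lra|].
    apply G. intro n. destruct n; [simpl; lra|].
    assert (r ^ S n <= s ^ S n) by (apply pow_incr; lra).
    assert (0 <= b (S n)) by (apply Hn; lia). nra. }
  lra.
Qed.

Lemma a_nonneg n : 0 <= a n. Proof. left; apply a_pos. Qed.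

Lemma F_incr r s : 0 <= r -> r < s -> s < 1 -> F r < F s.
Proof.
  intros. unfold F. apply mono; auto.
  - exact R1_a.
  - intros; apply a_nonneg.
  - rewrite a_1; lra.
Qed.

Lemma F_ge1 t : 0 <= t < 1 -> 1 <= F t.
Proof.
  intros [H0 H1]. destruct H0 as [H0|<-].
  - left. replace 1 with (F 0). apply F_incr; lra. unfold F; rewrite PSeries_0, a_0; auto.
  - unfold F; rewrite PSeries_0, a_0; lra.
Qed.

Lemma F1_pos t : 0 <= t < 1 -> 0 < F1 t.
Proof.
  intros [H0 H1].
  assert (E : F1 0 = 1/4) by (unfold F1; rewrite PSeries_0; unfold a1, PS_derive; rewrite a_1; simpl; lra).
  destruct H0 as [H0|<-]; [|lra].
  cut (F1 0 < F1 t); [lra|]. unfold F1. apply mono; auto.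
  - exact R1_a1.
  - intros; unfold a1, PS_derive. apply Rmult_le_pos; [apply pos_INR| apply a_nonneg].
  - unfold a1, PS_derive. apply Rmult_lt_0_compat; [apply lt_0_INR; lia | apply a_pos].
  - lra.
Qed.

Lemma A_decr r s : 0 <= r -> r < s -> s < 1 -> A s < A r.
Proof.
  intros. rewrite !A_series by (rewrite Rabs_pos_eq; lra).
  cut (PSeries (PS_scal (-1) Ac) r < PSeries (PS_scal (-1) Ac) s).
  { rewrite !PSeries_scal. lra. }
  apply mono; auto.
  - unfold Ac, a1; R1_tac.
  - intros n Hn. unfold PS_scal, scal; simpl. unfold mult; simpl.
    generalize (Ac_neg n Hn); lra.
  - unfold PS_scal, scal; simpl. unfold mult; simpl. rewrite Ac_1; lra.
Qed.

Lemma dF t : Rabs t < 1 -> is_derive F t (F1 t).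
Proof. intro. unfold F, F1, a1. apply is_derive_PSeries, inside; auto. exact R1_a. Qed.
Lemma dF1 t : Rabs t < 1 -> is_derive F1 t (F2 t).
Proof. intro. unfold F1, F2, a2. apply is_derive_PSeries, inside; auto. exact R1_a1. Qed.

Lemma DF t : Rabs t < 1 -> Derive (fun y => F y) t = F1 t.
Proof. intro; apply is_derive_unique, dF; auto. Qed.
Lemma DF1 t : Rabs t < 1 -> Derive (fun y => F1 y) t = F2 t.
Proof. intro; apply is_derive_unique, dF1; auto. Qed.
Lemma exF t : Rabs t < 1 -> ex_derive (fun y => F y) t.
Proof. intro; eexists; apply dF; auto. Qed.
Lemma exF1 t : Rabs t < 1 -> ex_derive (fun y => F1 y) t.
Proof. intro; eexists; apply dF1; auto. Qed.

Definition Kf t := t*(1-t)*(F t * F1 (1-t) + F1 t * F (1-t)).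
Definition g t := t*(1-t)*F t*F(1-t).

Ltac abs_tac := rewrite Rabs_pos_eq; lra.

Lemma dK t : 0 < t < 1 -> is_derive Kf t 0.
Proof.
  intro Ht. unfold Kf. auto_derive.
  - replace (1 + - t) with (1 - t) by ring.
    repeat split; first [apply exF | apply exF1]; abs_tac.
  - replace (1 + - t) with (1 - t) by ring.
    rewrite !DF, !DF1 by abs_tac.
    assert (E1 := ode t ltac:(abs_tac)).
    assert (E2 := ode (1-t) ltac:(abs_tac)).
    set (u := F t) in *; set (v := F (1-t)) in *; set (u1 := F1 t) in *;
    set (v1 := F1 (1-t)) in *; set (u2 := F2 t) in *; set (v2 := F2 (1-t)) in *.
    transitivity (v * (t * (1 - t) * u2 + (1 - 2 * t) * u1 - u / 4)
                  - u * ((1 - t) * (1 - (1 - t)) * v2 + (1 - 2 * (1 - t)) * v1 - v / 4)).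
    + field.
    + rewrite E1, E2. ring.
Qed.

Lemma Kconst t : 0 < t < 1 -> Kf t = Kf (1/2).
Proof.
  intro Ht. destruct (Rtotal_order t (1/2)) as [H|[H|H]].
  - apply eq_is_derive; [|lra]. intros x Hx. apply dK; lra.
  - subst; auto.
  - symmetry. apply eq_is_derive; [|lra]. intros x Hx. apply dK; lra.
Qed.

Lemma Khalf : Kf (1/2) = F (1/2) * A (1/2).
Proof. unfold Kf, A. replace (1 - 1/2) with (1/2) by field. field. Qed.

Definition dg t := F (1-t) * A t - Kf t.

Lemma dg_ok t : 0 < t < 1 -> is_derive g t (dg t).
Proof.
  intro Ht. unfold g. auto_derive.
  - replace (1 + - t) with (1 - t) by ring.
    repeat split; first [apply exF | apply exF1]; abs_tac.
  - replace (1 + - t) with (1 - t) by ring.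
    rewrite !DF by abs_tac. unfold dg, Kf, A. field.
Qed.

Lemma g_cont t : 0 < t < 1 -> continuity_pt g t.
Proof.
  intro Ht. assert (H : ex_derive g t) by (eexists; apply dg_ok; auto).
  apply continuity_pt_filterlim. exact (ex_derive_continuous g t H).
Qed.

Lemma A_half_pos : 0 < A (1/2).
Proof.
  unfold A. replace (1 - 2*(1/2)) with 0 by field.
  assert (0 < F1 (1/2)) by (apply F1_pos; lra). nra.
Qed.

Lemma dg_pos t : 0 < t < 1/2 -> 0 < dg t.
Proof.
  intro Ht. unfold dg. rewrite Kconst, Khalf by lra.
  assert (H1 : F (1/2) < F (1-t)) by (apply F_incr; lra).
  assert (H2 : A (1/2) < A t) by (apply A_decr; lra).
  assert (H3 : 1 <= F (1/2)) by (apply F_ge1; lra).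
  assert (H4 := A_half_pos). nra.
Qed.

Lemma dg_nonneg t : 0 < t <= 1/2 -> 0 <= dg t.
Proof.
  intros [H0 H1]. destruct H1 as [H1|H1]; [left; apply dg_pos; lra|]. subst t.
  unfold dg. rewrite Khalf. replace (1 - 1/2) with (1/2) by field. lra.
Qed.

Lemma mvt_g t1 t2 : 0 < t1 -> t1 < t2 -> t2 < 1 ->
  exists c, t1 <= c <= t2 /\ g t2 - g t1 = dg c * (t2 - t1).
Proof.
  intros H1 H2 H3.
  assert (HM := MVT_gen g t1 t2 dg).
  rewrite Rmin_left, Rmax_right in HM by lra. cbv zeta in HM.
  apply HM.
  - intros; apply dg_ok; lra.
  - intros; apply g_cont; lra.
Qed.

Lemma g_incr t1 t2 : 0 < t1 -> t1 < t2 -> t2 <= 1/2 -> g t1 < g t2.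
Proof.
  intros H1 H2 H3. set (m := (t1+t2)/2).
  destruct (mvt_g t1 m) as [c [Hc E]]; unfold m in *; try lra.
  destruct (mvt_g m t2) as [c' [Hc' E']]; unfold m in *; try lra.
  assert (0 < dg c) by (apply dg_pos; lra).
  assert (0 <= dg c') by (apply dg_nonneg; lra).
  nra.
Qed.

Lemma g_sym t : g (1 - t) = g t.
Proof. unfold g. replace (1 - (1 - t)) with t by ring. ring. Qed.

Fixpoint cc (n : nat) : R := match n with O => 1 | S m => cc m * ((2*INR m+1)/(2*INR m+2))^2 end.

Lemma a_cc n : a n = cc n.
Proof. induction n; simpl; [apply a_0|]. rewrite a_S, IHn. reflexivity. Qed.

Lemma PI_bounds : 3141592653/1000000000 < PI < 3141592654/1000000000.
Proof.
destruct (PI_2_3_7_ineq 5) as [H1 H2].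
unfold tg_alt, PI_2_3_7_tg, Ratan_seq in H1, H2.
simpl in H1, H2.
split; lra.
Qed.

Lemma F_half_bounds : 1180340570/1000000000 <= F (1/2) <= 1180340601/1000000000.
Proof.
  set (u := fun k => a k * (1/2)^k).
  assert (Ex : ex_series u).
  { apply exs. exact R1_a. rewrite Rabs_pos_eq; lra. }
  assert (E : F (1/2) = sum_f_R0 u 19 + Series (fun k => u (20 + k)%nat)).
  { unfold F, PSeries. fold u. apply (Series_incr_n u 20); [lia| auto]. }
  assert (Et : ex_series (fun k => u (20 + k)%nat)) by (apply (proj1 (ex_series_incr_n u 20)); auto).
  assert (T0 : 0 <= Series (fun k => u (20 + k)%nat)).
  { rewrite <- Series_zero. apply Series_le; auto. intros; split; [lra|].
    unfold u. apply Rmult_le_pos; [apply a_nonneg| apply pow_le; lra]. }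
  assert (T1 : Series (fun k => u (20 + k)%nat) <= a 20 * (1/2)^20 * 2).
  { assert (G : is_series (fun k => (a 20 * (1/2)^20) * (1/2)^k) (a 20 * (1/2)^20 * 2)).
    { replace (a 20 * (1/2)^20 * 2) with (a 20 * (1/2)^20 * / (1 - 1/2)) by field.
      apply (is_series_scal_l (a 20 * (1/2)^20) (fun k => (1/2)^k)).
      apply is_series_geom. rewrite Rabs_pos_eq; lra. }
    rewrite <- (is_series_unique _ _ G).
    apply Series_le; [| eexists; exact G].
    intro k. unfold u. split.
    - apply Rmult_le_pos; [apply a_nonneg| apply pow_le; lra].
    - rewrite pow_add. assert (a (20 + k) <= a 20) by (apply a_dec_le; lia).
      assert (0 <= (1/2)^20) by (apply pow_le; lra).
      assert (0 <= (1/2)^k) by (apply pow_le; lra).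
      rewrite (Rmult_assoc (a 20)). apply Rmult_le_compat_r; auto.
      apply Rmult_le_pos; auto. }
  assert (S : sum_f_R0 u 19 = sum_f_R0 (fun k => cc k * (1/2)^k) 19).
  { apply sum_eq. intros; unfold u; rewrite a_cc; auto. }
  rewrite a_cc in T1. rewrite S in E.
  set (Tl := Series (fun k => u (20 + k)%nat)) in *. clearbody Tl.
  simpl in E, T1. split; lra.
Qed.

Lemma ellK_F x : ellK x = PI/2 * F (x^2).
Proof. reflexivity. Qed.

Lemma fcor_g x : x^2 <= 1 -> fcor x = (PI/2)^2 * g (x^2).
Proof.
  intro Hx. unfold fcor. rewrite !ellK_F.
  assert (E : kprime x ^ 2 = 1 - x^2) by (unfold kprime; apply pow2_sqrt; lra).
  rewrite E. unfold g. ring.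
Qed.

Lemma s2 : (1 / sqrt 2)^2 = 1/2.
Proof.
  assert (H := sqrt_lt_R0 2 ltac:(lra)).
  assert (H2 := pow2_sqrt 2 ltac:(lra)).
  field_simplify; [|lra]. rewrite H2. field.
Qed.

Lemma sh : sqrt (1/2) ^ 2 = 1/2.
Proof. apply pow2_sqrt; lra. Qed.

Theorem corollary3p4 :
  (forall x y : R, 0 < x -> x < y -> y <= 1 / sqrt 2 -> fcor x < fcor y) /\
  (forall x y : R, 1 / sqrt 2 <= x -> x < y -> y < 1 -> fcor y < fcor x) /\
  (forall x : R, 0 < x < 1 -> fcor x <= fcor (sqrt (1/2))) /\
  fcor (sqrt (1/2)) = 1/4 * (ellK (sqrt (1/2))) ^ 2 /\
  859398 / 1000000 <= fcor (sqrt (1/2)) < 859399 / 1000000.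
Proof.
  assert (HPI := PI_RGT_0).
  assert (HP2 : 0 < (PI/2)^2) by (apply pow_lt; lra).
  assert (Hs := s2).
  assert (Hs0 : 0 < 1 / sqrt 2).
  { apply Rdiv_lt_0_compat; [lra| apply sqrt_lt_R0; lra]. }
  set (s := 1 / sqrt 2) in *. clearbody s.
  assert (Hfh : fcor (sqrt (1/2)) = (PI/2)^2 * g (1/2)).
  { rewrite fcor_g; rewrite sh; auto; lra. }
  split; [|split; [|split; [|split]]].
  - intros x y Hx Hxy Hy.
    assert (y^2 <= 1/2) by nra.
    rewrite !fcor_g by nra.
    apply Rmult_lt_compat_l; auto. apply g_incr; nra.
  - intros x y Hx Hxy Hy.
    assert (1/2 <= x^2) by nra.
    rewrite !fcor_g by nra.
    apply Rmult_lt_compat_l; auto.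
    rewrite <- (g_sym (x^2)), <- (g_sym (y^2)). apply g_incr; nra.
  - intros x Hx. rewrite Hfh, fcor_g by nra.
    apply Rmult_le_compat_l; [lra|].
    destruct (Rtotal_order (x^2) (1/2)) as [H|[H|H]].
    + left; apply g_incr; nra.
    + rewrite H; lra.
    + rewrite <- (g_sym (x^2)). left; apply g_incr; nra.
  - unfold fcor, kprime. rewrite sh.
    replace (1 - 1/2) with (1/2) by field. rewrite sh. field.
  - rewrite Hfh. unfold g. replace (1 - 1/2) with (1/2) by field.
    destruct PI_bounds as [P1 P2]. destruct F_half_bounds as [F1 F2].
    set (f := F (1/2)) in *. clearbody f.
    assert (L : 3141592653/1000000000 * (1180340570/1000000000) <= PI * f) by nra.
    assert (U : PI * f <= 3141592654/1000000000 * (1180340601/1000000000)) by nra.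
    assert (L2 : (3141592653/1000000000 * (1180340570/1000000000))^2 <= (PI * f)^2) by nra.
    assert (U2 : (PI * f)^2 <= (3141592654/1000000000 * (1180340601/1000000000))^2) by nra.
    replace ((PI / 2) ^ 2 * (1 / 2 * (1 / 2) * f * f)) with ((PI*f)^2/16) by field.
    split; lra.
Qed.
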